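(* A left cancellative semigroup $S$ has either exactly one $\mathcal{R}$-class or infinitely many $\mathcal{R}$-classes.
   Context: $S$ is left cancellative if $ax=ay$ implies $x=y$ for all $a,x,y\in S$. $\mathcal{R}$ is Green's relation on $S$: $x\,\mathcal{R}\,y$ iff $xS^1=yS^1$. *)

(* Defs.v *)
Definition associative {S : Type} (mul : S -> S -> S) : Prop :=
  forall x y z, mul x (mul y z) = mul (mul x y) z.

Definition left_cancellative {S : Type} (mul : S -> S -> S) : Prop :=
  forall a x y, mul a x = mul a y -> x = y.

(* z \in x S^1, where S^1 = S with an identity adjoined, so x S^1 = {x} ∪ x S *)
Definition in_xS1 {S : Type} (mul : S -> S -> S) (x z : S) : Prop :=
  z = x \/ exists s, z = mul x s.

Definition greenR {S : Type} (mul : S -> S -> S) (x y : S) : Prop :=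
  forall z, in_xS1 mul x z <-> in_xS1 mul y z.

Definition one_R_class {S : Type} (mul : S -> S -> S) : Prop :=
  inhabited S /\ forall x y, greenR mul x y.

(* infinitely many R-classes: an injection of nat into the set of R-classes *)
Definition infinitely_many_R_classes {S : Type} (mul : S -> S -> S) : Prop :=
  exists f : nat -> S, forall i j, greenR mul (f i) (f j) -> i = j.

(* Main.v *)
Require Import Defs.
From Stdlib Require Import Classical Arith Lia.

Section H.
Variables (T : Type) (mul : T -> T -> T) (assoc : associative mul)
  (lc : left_cancellative mul) (a : T).

Fixpoint p (n : nat) : T := match n with 0 => a | S n => mul a (p n) end.

Lemma p_cancel n x y : mul (p n) x = mul (p n) y -> x = y.
Proof.
  induction n; simpl; intros H. apply (lc _ _ _ H).
  rewrite <- !assoc in H. apply IHn. exact (lc _ _ _ H).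
Qed.

Lemma padd n k : p (S (n + k)) = mul (p n) (p k).
Proof.
  induction n; simpl. reflexivity.
  simpl in IHn. rewrite IHn, assoc. reflexivity.
Qed.

Lemma p_in n s : in_xS1 mul a (mul (p n) s).
Proof.
  destruct n; simpl; right. exists s; reflexivity.
  exists (mul (p n) s). rewrite assoc. reflexivity.
Qed.

Lemma p_in0 n : in_xS1 mul a (p n).
Proof. destruct n; simpl. left; reflexivity. right; eexists; reflexivity. Qed.

Lemma leftid u : a = mul a u -> in_xS1 mul a u -> forall z, in_xS1 mul a z.
Proof.
  intros Hu Hin z.
  assert (E : forall w, mul u w = w).
  { intros w. apply (lc a). rewrite assoc, <- Hu. reflexivity. }
  destruct Hin as [-> | [v ->]].
  - right. exists z. symmetry; apply E.
  - right. exists (mul v z). rewrite <- (E z) at 1. rewrite assoc. reflexivity.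
Qed.

Lemma lt_case i j : i < j -> greenR mul (p i) (p j) -> forall z, in_xS1 mul a z.
Proof.
  intros Hij G.
  destruct (proj1 (G (p i)) (or_introl eq_refl)) as [Hz | [s Hz]];
  replace j with (S (i + (j - i - 1))) in Hz by lia; rewrite padd in Hz.
  - set (u := p (j - i - 1)) in *.
    assert (a = mul a u).
    { destruct i. exact Hz.
      replace (p (S i)) with (p (S (i + 0))) in Hz by (f_equal; lia).
      rewrite padd in Hz. simpl in Hz. rewrite <- assoc in Hz.
      exact (p_cancel _ _ _ Hz). }
    apply (leftid u H). apply p_in0.
  - rewrite <- assoc in Hz. set (u := mul (p (j - i - 1)) s) in *.
    assert (a = mul a u).
    { destruct i. exact Hz.
      replace (p (S i)) with (p (S (i + 0))) in Hz by (f_equal; lia).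
      rewrite padd in Hz. simpl in Hz. rewrite <- assoc in Hz.
      exact (p_cancel _ _ _ Hz). }
    apply (leftid u H). apply p_in.
Qed.
End H.

Theorem mainTheorem8 (S : Type) (mul : S -> S -> S) (inh : inhabited S)
  (assoc : associative mul) (lc : left_cancellative mul) :
  one_R_class mul \/ infinitely_many_R_classes mul.
Proof.
  destruct (classic (forall a z, in_xS1 mul a z)) as [Hall | Hn].
  - left. split. exact inh. intros x y z. split; intros _; apply Hall.
  - right. apply not_all_ex_not in Hn. destruct Hn as [a Ha].
    exists (p _ mul a). intros i j G.
    destruct (lt_eq_lt_dec i j) as [[Hl|He]|Hl]; auto.
    + exfalso. apply Ha. exact (lt_case _ mul assoc lc a i j Hl G).
    + exfalso. apply Ha. apply (lt_case _ mul assoc lc a j i Hl).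
      intros z. split; apply G.
Qed.
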